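(* Let $m\ge n$ be positive integers and set $$A_{m,n}=\sum_{i,j\ge1}p_{i+j}\,Q_{m-i}(\alpha)\,Q_{n-j}(\alpha)=\sum_\lambda b_\lambda q_\lambda(\alpha).$$ Then $b_\lambda=\big[m'(1-\delta_{m,m'})-n'\big]\alpha$ if $\lambda=(m',n')$ is a partition with at most two parts (with $n'\ge0$) satisfying $\lambda\ge(m,n)$ in dominance order, and $b_\lambda=0$ otherwise.
   Context: $F=\mathbb{Q}(\alpha)$, $\Lambda_F=F[p_1,p_2,\dots]$ with $p_n$ the power sums. For a partition $\lambda$, $l(\lambda)$ is its number of parts and $z_\lambda=\prod_i i^{m_i}m_i!$ with $m_i$ the multiplicity of $i$. $Q_n(\alpha)=\sum_{\lambda\vdash n}\alpha^{-l(\lambda)}z_\lambda^{-1}p_\lambda$ for $n\ge1$, $Q_0=1$, $Q_n=0$ for $n<0$; $q_\lambda=Q_{\lambda_1}Q_{\lambda_2}\cdots$ (a basis of $\Lambda_F$). Dominance order: $\lambda\ge\mu$ iff $|\lambda|=|\mu|$ and $\lambda_1+\dots+\lambda_i\ge\mu_1+\dots+\mu_i$ for all $i$. (In the paper $A_{m,n}$ is written as $\sum_{i,j\ge1}h_{-(i+j)}(h_i.Q_m)(h_j.Q_n)$ with $h_{-k}$ multiplication by $p_k$ and $h_k=k\alpha\,\partial/\partial p_k$, which satisfy $h_i.Q_m=Q_{m-i}$.) *)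

(* Defs.v *)
(* F = Q(alpha) = {fraction {poly rat}}, alpha = 'X.
   Lambda_F restricted to the first N power sums: {mpoly F[N]}, p_k = 'X_(k-1). *)
From HB Require Import structures.
From mathcomp Require Import all_boot all_order all_algebra.
From mathcomp Require Import fraction.
From mathcomp Require Import mpoly.
Set Implicit Arguments. Unset Strict Implicit. Unset Printing Implicit Defensive.
Import Order.TTheory GRing.Theory Num.Theory.
Local Open Scope ring_scope.

Definition F : fieldType := {fraction {poly rat}}.
Definition alpha : F := tofrac ('X : {poly rat}).

Definition is_partition (l : seq nat) : bool :=
  sorted geq l && all (fun x => (0 < x)%N) l.

(* all partitions of d: every partition of d has at most d parts, each <= d,
   so it is obtained from some d-tuple with entries in {0..d} by deleting zeros *)
Definition partitions_of (d : nat) : seq (seq nat) :=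
  undup [seq l <- [seq [seq (val x : nat) | x <- val t & (0 < val x)%N]
                  | t : d.-tuple 'I_d.+1]
        | is_partition l && (sumn l == d)].

Definition zee (l : seq nat) : nat :=
  \prod_(1 <= i < (sumn l).+1) (i ^ count_mem i l * (count_mem i l)`!)%N.

Definition dominates (l mu : seq nat) : bool :=
  (sumn l == sumn mu) &&
  all (fun i => sumn (take i mu) <= sumn (take i l))%N
      (iota 0 (size l + size mu).+1).

Section Sym.
Variable N : nat.

(* power sum p_k (k >= 1) as the variable 'X_(k-1); only used for k <= N *)
Definition psum (k : nat) : {mpoly F[N]} :=
  match ltnP k.-1 N with
  | LtnNotGeq h => 'X_(Ordinal h)
  | GeqNotLtn _ => 0
  end.

Definition pprod (l : seq nat) : {mpoly F[N]} := \prod_(k <- l) psum k.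

Definition Qa (n : nat) : {mpoly F[N]} :=
  if n == 0%N then 1 else
  \sum_(l <- partitions_of n) (alpha ^- size l / (zee l)%:R) *: pprod l.

Definition qa (l : seq nat) : {mpoly F[N]} := \prod_(k <- l) Qa k.

(* A_{m,n} = sum_{i,j >= 1} p_{i+j} Q_{m-i} Q_{n-j}; terms with i > m or j > n
   vanish since Q_k = 0 for k < 0 *)
Definition Amn (m n : nat) : {mpoly F[N]} :=
  \sum_(1 <= i < m.+1) \sum_(1 <= j < n.+1) psum (i + j) * Qa (m - i) * Qa (n - j).

End Sym.

Definition bcoef (m n : nat) (l : seq nat) : F :=
  let m' := nth 0%N l 0 in
  let n' := nth 0%N l 1 in
  if (size l <= 2)%N && dominates l [:: m; n] then
    (((m' * (m' != m))%N)%:Z - n'%:Z)%:~R * alpha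
  else 0.

(* Main.v *)
Require Import Defs.
From HB Require Import structures.
From mathcomp Require Import all_boot all_order all_algebra.
From mathcomp Require Import fraction.
From mathcomp Require Import mpoly.
From mathcomp Require Import ring zify.
Set Implicit Arguments. Unset Strict Implicit. Unset Printing Implicit Defensive.

Lemma geq_total : total geq.
Proof. move=> a b /=; exact: leq_total. Qed.
Lemma geq_trans : transitive geq.
Proof. move=> a b c /= h1 h2; exact: leq_trans h2 h1. Qed.
Lemma geq_anti : antisymmetric geq.
Proof. move=> a b /= h; apply/eqP; rewrite eqn_leq andbC. exact: h. Qed.

Lemma mem_le_sumn (l : seq nat) i : i \in l -> i <= sumn l.
Proof.
elim: l => //= a l IH; rewrite inE => /orP[/eqP->|/IH h]; first exact: leq_addr.
exact: leq_trans h (leq_addl _ _).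
Qed.

Lemma size_le_sumn (l : seq nat) : all (fun x => 0 < x) l -> size l <= sumn l.
Proof.
elim: l => //= a l IH /andP[ha /IH h]. by rewrite -add1n leq_add.
Qed.

Lemma map_nth_iota_pad (l : seq nat) d : size l <= d ->
  map (nth 0 l) (iota 0 d) = l ++ nseq (d - size l) 0.
Proof.
move=> h; apply: (@eq_from_nth _ 0).
  by rewrite size_map size_iota size_cat size_nseq subnKC.
move=> i; rewrite size_map size_iota => hi.
rewrite (nth_map 0) ?size_iota // nth_iota // add0n nth_cat nth_nseq.
case: ltnP => // hl. rewrite nth_default //. by case: ifP.
Qed.

Lemma mem_partitions_of d l :
  (l \in partitions_of d) = is_partition l && (sumn l == d).
Proof.
rewrite /partitions_of mem_undup mem_filter.
apply/idP/idP => [/andP[]//|H]; rewrite H /=.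
case/andP: H => /andP[_ hpos] /eqP hs.
have hsz : size l <= d by rewrite -hs size_le_sumn.
set t := [tuple (inord (nth 0 l i) : 'I_d.+1) | i < d].
apply/mapP; exists t; first by rewrite mem_enum.
rewrite -filter_map.
have -> : [seq val x | x <- val t] = map (nth 0 l) (iota 0 d).
  rewrite /t /= -val_enum_ord -!map_comp; apply: eq_map => i /=.
  rewrite inordK // ltnS.
  case: (ltnP i (size l)) => hi.
    by apply: leq_trans (mem_le_sumn (mem_nth 0 hi)) _; rewrite hs.
  by rewrite nth_default.
rewrite map_nth_iota_pad // filter_cat filter_nseq /= cats0.
by symmetry; apply/all_filterP.
Qed.

Lemma uniq_partitions_of d : uniq (partitions_of d).
Proof. exact: undup_uniq. Qed.

Definition ins (r : nat) (mu : seq nat) := sort geq (r :: mu).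

Lemma perm_ins r mu : perm_eq (ins r mu) (r :: mu).
Proof. by rewrite /ins perm_sort. Qed.

Lemma part_ins r mu : 0 < r -> is_partition mu -> is_partition (ins r mu).
Proof.
move=> hr /andP[_ hmu]; rewrite /is_partition sort_sorted; last exact: geq_total.
by rewrite (perm_all _ (perm_ins r mu)) /= hr.
Qed.

Lemma sumn_ins r mu : sumn (ins r mu) = r + sumn mu.
Proof. by rewrite (perm_sumn (perm_ins r mu)). Qed.

Lemma part_rem r l : is_partition l -> is_partition (rem r l).
Proof.
case/andP=> hs ha; apply/andP; split.
  apply: (subseq_sorted geq_trans (rem_subseq r l)). exact hs.
apply/allP=> x /mem_rem hx; exact: (allP ha).
Qed.

Lemma rem_ins r mu : is_partition mu -> rem r (ins r mu) = mu.
Proof.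
case/andP=> hs _; apply: (sorted_eq geq_trans geq_anti).
- apply: (subseq_sorted geq_trans (rem_subseq _ _)); exact: (sort_sorted geq_total).
- exact: hs.
have hr : r \in ins r mu by rewrite (perm_mem (perm_ins r mu)) mem_head.
rewrite -(perm_cons r) perm_sym.
apply: perm_trans (perm_to_rem hr); rewrite perm_sym; exact: perm_ins.
Qed.

Lemma ins_rem r l : is_partition l -> r \in l -> ins r (rem r l) = l.
Proof.
case/andP=> hs _ hr; apply: (sorted_eq geq_trans geq_anti).
- exact: (sort_sorted geq_total).
- exact: hs.
apply: perm_trans (perm_ins _ _) _; rewrite perm_sym; exact: perm_to_rem.
Qed.

Lemma sumn_rem r l : r \in l -> sumn l = r + sumn (rem r l).
Proof. by move=> hr; rewrite (perm_sumn (perm_to_rem hr)). Qed.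

Definition zf (l : seq nat) (i : nat) := (i ^ count_mem i l * (count_mem i l)`!)%N.

Lemma zee_ext l B : sumn l <= B -> zee l = \prod_(1 <= i < B.+1) zf l i.
Proof.
move=> hB; rewrite /zee /zf [RHS](@big_cat_nat _ _ _ (sumn l).+1 1 B.+1) //=.
rewrite [X in _ = _ * X]big1_seq ?muln1 // => i /andP[_].
rewrite mem_index_iota => /andP[hi _].
have /count_memPn -> : i \notin l.
  by apply/negP => /mem_le_sumn; rewrite leqNgt hi.
by rewrite expn0.
Qed.

Lemma zee_rem r l : 0 < r -> r \in l -> zee l = (r * count_mem r l * zee (rem r l))%N.
Proof.
move=> hr0 hr.
have hcnt : forall i, count_mem i l = ((r == i) + count_mem i (rem r l))%N.
  by move=> i; rewrite (permP (perm_to_rem hr)).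
rewrite (zee_ext (leqnn (sumn l))) (@zee_ext (rem r l) (sumn l)); last first.
  by rewrite [X in _ <= X](sumn_rem hr) leq_addl.
have hin : r \in index_iota 1 (sumn l).+1 by rewrite mem_index_iota hr0 ltnS mem_le_sumn.
have hu : uniq (index_iota 1 (sumn l).+1) by rewrite /index_iota iota_uniq.
rewrite !(bigD1_seq r hin hu) /=.
rewrite (eq_bigr (zf (rem r l))); last by move=> i hi; rewrite /zf hcnt eq_sym (negbTE hi).
rewrite /zf !hcnt eqxx add1n expnS factS.
by rewrite !mulnA [r * r ^ _ * _]mulnAC.
Qed.

Lemma sum_undup_count (l : seq nat) :
  (\sum_(r <- undup l) r * count_mem r l)%N = sumn l.
Proof.
transitivity (\sum_(r <- undup l) iterop (count_mem r l) addn r 0)%N.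
  by apply: eq_bigr => r _; rewrite Monoid.iteropE iter_addn_0.
by rewrite big_undup_iterop_count sumnE.
Qed.

Definition mk (s a : nat) : seq nat := if a == s then [:: s] else [:: a; s - a].

Lemma mk_inj s : injective (mk s).
Proof.
move=> a b e; move: (congr1 (head 0) e); rewrite /mk.
by do 2 case: eqP => [->|_] /=.
Qed.

Lemma filt_parts m n : 0 < n -> n <= m ->
  perm_eq [seq l <- partitions_of (m + n) | (size l <= 2) && dominates l [:: m; n]]
          [seq mk (m + n) a | a <- iota m n.+1].
Proof.
move=> hn hnm.
apply: uniq_perm.
- by rewrite filter_uniq // uniq_partitions_of.
- by rewrite (map_inj_uniq (@mk_inj _)) iota_uniq.
move=> l; rewrite mem_filter mem_partitions_of; apply/idP/idP.
- case/andP=> /andP[hsz hdom] /andP[/andP[hsort hpos] /eqP hsum].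
  case/andP: hdom => _ /allP hdom.
  suff [a ha ->] : exists2 a, m <= a <= m + n & l = mk (m + n) a.
    by apply/mapP; exists a; rewrite // mem_iota; lia.
  case: l hsz hsort hpos hsum hdom => [|a [|b [|c l]]] //= _.
  + move=> _ _; lia.
  + move=> _ _ hsum _; exists (m + n); first lia.
    by rewrite /mk eqxx -hsum addn0.
  + rewrite andbT => hab /and3P[ha hb _] hsum hdom.
    move: (hdom 1%N) => /(_ isT) /= h1.
    exists a; first lia.
    rewrite /mk; case: eqP => [?|_]; first by lia.
    congr [:: _; _]; lia.
- case/mapP=> a; rewrite mem_iota => /andP[ha1 ha2] hl; subst l.
  rewrite /mk; case: eqP => [ha|hne].
  + rewrite /is_partition /dominates /= !addn0 eqxx /=.
    by rewrite !andbT; repeat (apply/andP; split); try apply/eqP; lia.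
  + rewrite /is_partition /dominates /= !addn0 /=.
    by rewrite !andbT; repeat (apply/andP; split); try apply/eqP; lia.
Qed.

Import Order.TTheory GRing.Theory Num.Theory.
Local Open Scope ring_scope.

Lemma alpha_neq0 : alpha != 0.
Proof. by rewrite /alpha tofrac_eq0 polyX_eq0. Qed.

Lemma natF_neq0 n : (0 < n)%N -> (n%:R : F) != 0.
Proof.
move=> hn.
have -> : (n%:R : F) = tofrac (n%:R : {poly rat}) by rewrite rmorph_nat.
by rewrite tofrac_eq0 -(rmorph_nat (@polyC _)) polyC_eq0 pnatr_eq0 -lt0n.
Qed.

Lemma zee_gt0 l : (0 < zee l)%N.
Proof.
rewrite /zee big_seq; apply: prodn_cond_gt0 => i.
by rewrite mem_index_iota => /andP[hi _]; rewrite muln_gt0 expn_gt0 hi fact_gt0.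
Qed.

Definition cc (l : seq nat) : F := alpha ^- size l / (zee l)%:R.

Lemma fld_aux (K : fieldType) (a b x z : K) : a != 0 -> b != 0 -> x != 0 -> z != 0 ->
  b^-1 / z = a * x * ((a * b)^-1 / (x * z)).
Proof. by move=> ha hb hx hz; field; rewrite ha hb hx hz. Qed.

Lemma cc_rem l r : is_partition l -> r \in l ->
  cc (rem r l) = alpha * (r * count_mem r l)%:R * cc l.
Proof.
move=> hl hr; case/andP: (hl) => _ /allP hpos; have hr0 := hpos r hr.
have hc : (0 < count_mem r l)%N by rewrite -has_count has_pred1.
have hz := zee_gt0 (rem r l).
rewrite /cc size_rem // (zee_rem hr0 hr).
case E: (size l) => [|s]; first by move: hr; case: l {hl hpos hc hz} E.
rewrite /= [((_ * zee _)%N)%:R]natrM exprS.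
apply: fld_aux; first exact: alpha_neq0.
- by rewrite expf_neq0 // alpha_neq0.
- by rewrite natF_neq0 // muln_gt0 hr0.
- exact: natF_neq0.
Qed.

Lemma sum_cc_rem l : is_partition l ->
  \sum_(r <- undup l) cc (rem r l) = alpha * (sumn l)%:R * cc l.
Proof.
move=> hl.
transitivity (\sum_(r <- undup l) alpha * cc l * (r * count_mem r l)%:R).
  rewrite [LHS]big_seq [RHS]big_seq; apply: eq_bigr => r; rewrite mem_undup => hr.
  by rewrite cc_rem // mulrAC.
by rewrite -mulr_sumr -natr_sum sum_undup_count mulrAC.
Qed.

Section Newton.
Variable N : nat.

Lemma QaE d : Qa N d = \sum_(l <- partitions_of d) cc l *: pprod N l.
Proof.
rewrite /Qa; case: eqP => [->|//].
rewrite (perm_big [:: [::]]) ?big_seq1; last first.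
  apply: uniq_perm; [exact: uniq_partitions_of | by [] | move=> l].
  rewrite mem_partitions_of inE; case: l => [|a l] //=.
  apply/negbTE/negP => /andP[/andP[_ /= /andP[ha _]]].
  by rewrite addn_eq0 => /andP[/eqP ha0 _]; rewrite ha0 in ha.
by rewrite /cc /pprod big_nil /zee /= big_geq // expr0 invr1 mulr1 scale1r.
Qed.

Definition phi (x : nat * seq nat) := (ins x.1 x.2, x.1).

Lemma perm_pairs k :
  perm_eq (map phi [seq (r, mu) | r <- iota 1 k, mu <- partitions_of (k - r)])
          [seq (l, r) | l <- partitions_of k, r <- undup l].
Proof.
apply: uniq_perm.
- rewrite map_inj_in_uniq.
    apply: allpairs_uniq_dep.
    + exact: iota_uniq.
    + by move=> r _; exact: uniq_partitions_of.
    + by move=> [a u] [b v] _ _ /= [-> ->].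
  move=> [r mu] [r' mu'] /allpairsPdep [x [y [_ hy [-> ->]]]].
  move=> /allpairsPdep [x' [y' [_ hy' [-> ->]]]] /= [e1 e2]; subst x'.
  move: hy hy'; rewrite !mem_partitions_of => /andP[py _] /andP[py' _].
  by rewrite -(rem_ins x py) e1 rem_ins.
- apply: allpairs_uniq_dep.
  + exact: uniq_partitions_of.
  + by move=> l _; exact: undup_uniq.
  + by move=> [a u] [b v] _ _ /= [-> ->].
move=> [l r]; apply/idP/idP.
- case/mapP=> [[r0 mu]] /allpairsPdep [x [y [hx hy [-> ->]]]] /= [-> ->].
  move: hx; rewrite mem_iota => /andP[hx1 hx2].
  move: hy; rewrite mem_partitions_of => /andP[py /eqP sy].
  apply/allpairsPdep; exists (ins x y), x; split => //.
    rewrite mem_partitions_of part_ins // sumn_ins sy /=.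
    by rewrite subnKC // -ltnS -(add1n k).
  by rewrite mem_undup (perm_mem (perm_ins x y)) mem_head.
- case/allpairsPdep=> [l0 [r0 [hl hr [-> ->]]]].
  move: hr; rewrite mem_undup => hr.
  move: (hl); rewrite mem_partitions_of => /andP[pl /eqP sl].
  have hr0 : (0 < r0)%N by case/andP: pl => _ /allP; apply.
  apply/mapP; exists (r0, rem r0 l0); last by rewrite /phi /= ins_rem.
  apply/allpairsPdep; exists r0, (rem r0 l0); split => //.
    by rewrite mem_iota hr0 add1n ltnS -sl mem_le_sumn.
  rewrite mem_partitions_of part_rem //= -sl (sumn_rem hr) addKn.
  by rewrite eqxx.
Qed.

Lemma newton k : (0 < k)%N ->
  \sum_(1 <= r < k.+1) psum N r * Qa N (k - r) = (k%:R * alpha) *: Qa N k.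
Proof.
move=> hk.
pose G := fun y : seq nat * nat => cc (rem y.2 y.1) *: pprod N y.1.
transitivity (\sum_(x <- [seq (r, mu) | r <- iota 1 k, mu <- partitions_of (k - r)]) G (phi x)).
  rewrite big_allpairs_dep /= /index_iota subSS subn0.
  apply: eq_big_seq => r hr; rewrite QaE mulr_sumr big_seq [RHS]big_seq.
  apply: eq_bigr => mu hmu.
  rewrite /G /phi /= rem_ins; last by move: hmu; rewrite mem_partitions_of => /andP[].
  by rewrite /pprod (perm_big _ (perm_ins r mu)) big_cons scalerAr.
rewrite -(big_map phi xpredT G) (perm_big _ (perm_pairs k)).
rewrite big_allpairs_dep /= QaE scaler_sumr big_seq [RHS]big_seq.
apply: eq_bigr => l hl.
move: hl; rewrite mem_partitions_of => /andP[pl /eqP sl].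
rewrite /G /= -scaler_suml sum_cc_rem // scalerA sl.
by rewrite (mulrC alpha).
Qed.

End Newton.

Lemma intBE (x y : nat) : ((x%:Z - y%:Z)%:~R : F) = x%:R - y%:R.
Proof. by rewrite mulrzBr. Qed.

Section Main.
Variable N : nat.

Lemma newton' b : \sum_(1 <= j < b.+1) psum N j.+1 * Qa N (b - j) =
  ((b.+1)%:R * alpha) *: Qa N b.+1 - psum N 1 * Qa N b.
Proof.
rewrite -newton // [in RHS]big_ltn // [in RHS]big_add1 /= subn1 /=.
rewrite addrAC subrr add0r; apply: eq_bigr => j _; by rewrite subSS.
Qed.

Lemma Amn0 m : Amn N m 0 = 0.
Proof. by rewrite /Amn big1 // => i _; rewrite big_geq. Qed.

Lemma Amn_step a b : Amn N a.+1 b = Amn N a b.+1 +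
  (Qa N a * (((b.+1)%:R * alpha) *: Qa N b.+1)
   - Qa N b * (((a.+1)%:R * alpha) *: Qa N a.+1)).
Proof.
set D := \sum_(1 <= i < a.+1) \sum_(1 <= j < b.+1)
           psum N (i + j.+1) * Qa N (a - i) * Qa N (b - j).
have L : Amn N a.+1 b = Qa N a * (\sum_(1 <= j < b.+1) psum N j.+1 * Qa N (b - j)) + D.
  rewrite /Amn big_ltn // big_add1 /=; congr (_ + _).
    rewrite mulr_sumr; apply: eq_bigr => j _; rewrite add1n subn1 /=; ring.
  rewrite /D; apply: eq_bigr => i _; apply: eq_bigr => j _; by rewrite subSS addSnnS.
have R : Amn N a b.+1 = Qa N b * (\sum_(1 <= i < a.+1) psum N i.+1 * Qa N (a - i)) + D.
  rewrite /Amn; under eq_bigr => i _ do rewrite big_ltn // big_add1 /=.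
  rewrite big_split /=; congr (_ + _).
    rewrite mulr_sumr; apply: eq_bigr => i _; rewrite addn1 subn1 /=; ring.
rewrite L R !newton'; ring.
Qed.

Definition w (m s a : nat) : F := (((a * (a != m))%N)%:Z - (s - a)%:Z)%:~R.

Definition T m n := \sum_(a <- iota m n.+1)
  (w m (m + n) a * alpha) *: (Qa N a * Qa N (m + n - a)).

Lemma Amn_closed n m : Amn N m n = T m n.
Proof.
elim: n m => [|n IH] m.
  rewrite Amn0 /T /= big_cons big_nil /w eqxx muln0 addn0 subnn.
  by rewrite subrr mulr0z mul0r scale0r addr0.
have -> : Amn N m n.+1 = Amn N m.+1 n -
  (Qa N m * (((n.+1)%:R * alpha) *: Qa N n.+1)
   - Qa N n * (((m.+1)%:R * alpha) *: Qa N m.+1)) by rewrite Amn_step addrK.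
rewrite IH /T addSnnS /= !big_cons.
have tail : \sum_(j <- iota m.+2 n)
     (w m.+1 (m + n.+1) j * alpha) *: (Qa N j * Qa N (m + n.+1 - j)) =
   \sum_(j <- iota m.+2 n)
      (w m (m + n.+1) j * alpha) *: (Qa N j * Qa N (m + n.+1 - j)).
  apply: eq_big_seq => j; rewrite mem_iota => /andP[hj _].
  have h1 : (j == m) = false by apply/eqP; lia.
  have h2 : (j == m.+1) = false by apply/eqP; lia.
  by rewrite /w h1 h2.
rewrite tail.
have e1 : (m + n.+1 - m = n.+1)%N by lia.
have e2 : (m + n.+1 - m.+1 = n)%N by lia.
have h3 : (m.+1 == m) = false by apply/eqP; lia.
rewrite /w !eqxx h3 !muln0 muln1 e1 e2 !intBE.
rewrite -!mul_mpolyC !(rmorphM, rmorphB, rmorph_nat).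
ring.
Qed.

End Main.


Unset Implicit Arguments.

Theorem lemma3p8 (N m n : nat) :
  (0 < n)%N -> (n <= m)%N -> (m + n <= N)%N ->
  Amn N m n = \sum_(l <- partitions_of (m + n)) bcoef m n l *: qa N l.
Proof.
move=> hn hnm _.
rewrite Amn_closed /T.
rewrite (bigID (fun l => (size l <= 2)%N && dominates l [:: m; n])).
rewrite [X in _ = _ + X]big1 ?addr0; last by move=> l /negbTE h; rewrite /bcoef h scale0r.
rewrite -[RHS]big_filter (perm_big _ (filt_parts hn hnm)) big_map.
apply: eq_big_seq => a ha.
have hmem : mk (m + n) a \in [seq l <- partitions_of (m + n) | (size l <= 2)%N && dominates l [:: m; n]].
  by rewrite (perm_mem (filt_parts hn hnm)) map_f.
move: hmem; rewrite mem_filter => /andP[hc _].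
rewrite /bcoef hc.
have Qa0 : Qa N 0 = 1 by [].
rewrite /mk; case: eqP => [ha'|ha'].
- by rewrite ha' subnn /qa big_seq1 /w subnn Qa0 mulr1.
- by rewrite /qa big_cons big_seq1 /w.
Qed.
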